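(* Let $\alpha>0$, $N\ge1$, $r\ge1$, and let $(\mathbf A^k_n)$ and $(\mathbf B^k_n)$, $k\in[r]$, $n\in[N]$, be tuples of matrices with $\mathbf A^k_n,\mathbf B^k_n\in\mathbb R^{m_n\times p_n}$ and $\|\mathbf A^k_n\|_F=\|\mathbf B^k_n\|_F=\alpha$ for all $k,n$. If $\sqrt{\sum_{k=1}^r\sum_{n=1}^N\|\mathbf A^k_n-\mathbf B^k_n\|_F^2}\le\epsilon$, then $$\Big\|\sum_{k=1}^r\mathbf A^k_1\otimes\cdots\otimes\mathbf A^k_N-\sum_{k=1}^r\mathbf B^k_1\otimes\cdots\otimes\mathbf B^k_N\Big\|_F\le\alpha^{N-1}\sqrt{Nr}\,\epsilon.$$
   Context: $\otimes$ is the Kronecker product and $\|\cdot\|_F$ the Frobenius norm. *)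

(* Defs.v *)
From mathcomp Require Import all_boot all_order all_algebra.
From mathcomp Require Import reals.
From mathcomp Require Export mxtens.
Set Implicit Arguments. Unset Strict Implicit. Unset Printing Implicit Defensive.
Import Order.TTheory GRing.Theory Num.Theory.
Local Open Scope ring_scope.

Definition frob (R : realType) (m p : nat) (A : 'M[R]_(m, p)) : R :=
  Num.sqrt (\sum_(i < m) \sum_(j < p) A i j ^+ 2).

Fixpoint prodd (d : nat -> nat) (N : nat) : nat :=
  match N with 0 => 1%N | N'.+1 => (prodd d N' * d N')%N end.

(* Iterated Kronecker product A 0 (x) A 1 (x) ... (x) A (N-1)
   (built left-associatively from the 1x1 identity, using mathcomp's
   row-major Kronecker product tensmx). *)
Fixpoint kron (R : realType) (m p : nat -> nat)
    (A : forall n : nat, 'M[R]_(m n, p n)) (N : nat)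
    : 'M[R]_(prodd m N, prodd p N) :=
  match N return 'M[R]_(prodd m N, prodd p N) with
  | 0 => 1%:M
  | N'.+1 => tensmx (kron A N') (A N')
  end.

(* Main.v *)
Require Import Defs.
From mathcomp Require Import all_boot all_order all_algebra.
From mathcomp Require Import reals.
From mathcomp Require Import ring lra.
Import Order.TTheory GRing.Theory Num.Theory.
Local Open Scope ring_scope.

Section Aux.
Set Implicit Arguments.
Variable R : realType.

Lemma cs (I : finType) (x y : I -> R) :
  (\sum_i x i * y i) ^+ 2 <= (\sum_i x i ^+ 2) * (\sum_i y i ^+ 2).
Proof.
set sx := \sum_i x i ^+ 2; set sy := \sum_i y i ^+ 2; set d := \sum_i x i * y i.
have H0 : 0 <= \sum_a \sum_b (x a * y b - x b * y a) ^+ 2.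
  by apply: sumr_ge0 => a _; apply: sumr_ge0 => b _; apply: sqr_ge0.
have E : \sum_a \sum_b (x a * y b - x b * y a) ^+ 2
    = \sum_a (x a ^+ 2 * sy + y a ^+ 2 * sx - 2 * (x a * y a) * d).
  apply: eq_bigr => a _.
  rewrite /sx /sy /d !mulr_sumr -big_split -sumrB /=.
  by apply: eq_bigr => b _; ring.
rewrite E sumrB big_split /= -!mulr_suml -/sx -/sy -/d in H0.
rewrite -mulr_sumr -/d in H0. lra.
Qed.

Lemma sum_le_sqrt (I : finType) (x : I -> R) :
  \sum_i x i <= Num.sqrt (#|I|%:R) * Num.sqrt (\sum_i x i ^+ 2).
Proof.
have := @cs _ x (fun _ => 1).
rewrite (eq_bigr (fun i => x i)); last by move=> i _; rewrite mulr1.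
move=> H.
have E1 : \sum_(i : I) (1:R) ^+ 2 = #|I|%:R.
  by rewrite (eq_bigr (fun _ => 1)) ?expr1n //; exact: sumr_const.
rewrite E1 in H.
rewrite -sqrtrM ?ler0n // mulrC.
apply: (le_trans (ler_norm _)).
rewrite -sqrtr_sqr ler_sqrt //.
apply: mulr_ge0; [apply: sumr_ge0 => i _; apply: sqr_ge0 | exact: ler0n].
Qed.

Definition sq m p (A : 'M[R]_(m, p)) := \sum_(i < m) \sum_(j < p) A i j ^+ 2.

Lemma sq_ge0 m p (A : 'M[R]_(m, p)) : 0 <= sq A.
Proof. by apply: sumr_ge0 => i _; apply: sumr_ge0 => j _; apply: sqr_ge0. Qed.

Lemma frob_ge0 m p (A : 'M[R]_(m, p)) : 0 <= frob A.
Proof. exact: sqrtr_ge0. Qed.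

Lemma frobD m p (A B : 'M[R]_(m, p)) : frob (A + B) <= frob A + frob B.
Proof.
have hpos : 0 <= frob A + frob B by apply: addr_ge0; apply: sqrtr_ge0.
rewrite -[frob A + frob B]ger0_norm // -sqrtr_sqr /frob.
rewrite ler_sqrt ?sqr_ge0 //.
have hA := sq_ge0 A; have hB := sq_ge0 B.
rewrite /sq in hA hB.
rewrite sqrrD !sqr_sqrtr //.
have E : \sum_(i < m) \sum_(j < p) (A + B) i j ^+ 2 =
   \sum_(i < m) \sum_(j < p) A i j ^+ 2 + \sum_(i < m) \sum_(j < p) B i j ^+ 2
   + 2 * \sum_(i < m) \sum_(j < p) (A i j * B i j).
  rewrite -big_split mulr_sumr -big_split; apply: eq_bigr => i _ /=.
  rewrite -big_split mulr_sumr -big_split; apply: eq_bigr => j _ /=.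
  rewrite !mxE; ring.
rewrite E.
have C := @cs _ (fun ij : 'I_m * 'I_p => A ij.1 ij.2) (fun ij => B ij.1 ij.2).
rewrite -(pair_bigA _ (fun i j => A i j ^+ 2)) -(pair_bigA _ (fun i j => B i j ^+ 2))
  -(pair_bigA _ (fun i j => A i j * B i j)) /= in C.
set a := \sum_(i < m) \sum_(j < p) A i j ^+ 2 in C *.
set b := \sum_(i < m) \sum_(j < p) B i j ^+ 2 in C *.
set d := \sum_(i < m) \sum_(j < p) (A i j * B i j) in C *.
suff : d <= Num.sqrt a * Num.sqrt b by lra.
apply: (le_trans (ler_norm _)).
rewrite -sqrtr_sqr -sqrtrM // ler_sqrt //.
exact: mulr_ge0.
Qed.

Lemma frobN m p (A : 'M[R]_(m, p)) : frob (- A) = frob A.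
Proof.
rewrite /frob; congr Num.sqrt; apply: eq_bigr => i _; apply: eq_bigr => j _.
by rewrite mxE sqrrN.
Qed.

Lemma frob0 m p : frob (0 : 'M[R]_(m, p)) = 0.
Proof.
rewrite /frob big1 ?sqrtr0 // => i _; rewrite big1 // => j _.
by rewrite mxE expr0n.
Qed.

Lemma frob_sum (I : finType) m p (F : I -> 'M[R]_(m, p)) :
  frob (\sum_i F i) <= \sum_i frob (F i).
Proof.
apply: (big_ind2 (fun (a : 'M[R]_(m,p)) (b : R) => frob a <= b)).
- by rewrite frob0.
- move=> x1 x2 y1 y2 h1 h2; apply: (le_trans (frobD _ _)); exact: lerD.
- by [].
Qed.

Lemma frob_tens m n p q (A : 'M[R]_(m, n)) (B : 'M[R]_(p, q)) :
  frob (tensmx A B) = frob A * frob B.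
Proof.
rewrite /frob -sqrtrM; last exact: (sq_ge0 A).
congr Num.sqrt.
rewrite mulr_sum; apply: eq_bigr => i _.
rewrite mulr_sum; apply: eq_bigr => j _.
by rewrite mxE exprMn.
Qed.

Lemma tensBl m n p q (A A' : 'M[R]_(m, n)) (B : 'M[R]_(p, q)) :
  tensmx (A - A') B = tensmx A B - tensmx A' B.
Proof. by apply/matrixP => i j; rewrite !mxE; ring. Qed.

Lemma tensBr m n p q (A : 'M[R]_(m, n)) (B B' : 'M[R]_(p, q)) :
  tensmx A (B - B') = tensmx A B - tensmx A B'.
Proof. by apply/matrixP => i j; rewrite !mxE; ring. Qed.

End Aux.

Theorem lemma8 (R : realType) (N r : nat) (m p : nat -> nat)
    (A B : 'I_r -> forall n : nat, 'M[R]_(m n, p n)) (alpha eps : R) :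
  0 < alpha -> (1 <= N)%N -> (1 <= r)%N ->
  (forall (k : 'I_r) (n : 'I_N), frob (A k n) = alpha /\ frob (B k n) = alpha) ->
  Num.sqrt (\sum_(k < r) \sum_(n < N) frob (A k n - B k n) ^+ 2) <= eps ->
  frob (\sum_(k < r) kron (A k) N - \sum_(k < r) kron (B k) N)
    <= alpha ^+ (N - 1) * Num.sqrt (N * r)%:R * eps.
Proof.
move=> ha hN hr H Heps.
have HA : forall k n, (n < N)%N -> frob (A k n) = alpha.
  by move=> k n hn; exact: (H k (Ordinal hn)).1.
have HB : forall k n, (n < N)%N -> frob (B k n) = alpha.
  by move=> k n hn; exact: (H k (Ordinal hn)).2.
have kB : forall k n, (n <= N)%N -> frob (kron (B k) n) = alpha ^+ n.
  move=> k; elim=> [|n IH] hn /=.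
    rewrite /frob big_ord1 big_ord1 mxE /= expr1n sqrtr1; done.
  by rewrite frob_tens IH ?(ltnW hn) // HB // exprSr.
have key : forall k n, (n <= N)%N -> alpha * frob (kron (A k) n - kron (B k) n)
    <= alpha ^+ n * \sum_(j < n) frob (A k j - B k j).
  move=> k; elim=> [|n IH] hn /=.
    by rewrite subrr frob0 mulr0 big_ord0 mulr0.
  have -> : tensmx (kron (A k) n) (A k n) - tensmx (kron (B k) n) (B k n)
     = tensmx (kron (A k) n - kron (B k) n) (A k n)
       + tensmx (kron (B k) n) (A k n - B k n).
    by rewrite tensBl tensBr addrA subrK.
  have h1 := frobD _ (tensmx (kron (A k) n - kron (B k) n) (A k n))
                   (tensmx (kron (B k) n) (A k n - B k n)).
  rewrite !frob_tens HA // kB ?(ltnW hn) // in h1.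
  have := IH (ltnW hn).
  rewrite big_ord_recr /= exprS.
  set f := frob (kron (A k) n - kron (B k) n).
  set f' := frob _ in h1 *.
  set P := alpha ^+ n; set S := \sum_(j < n) _; set dn := frob (A k n - B k n).
  have hP : 0 <= P by rewrite /P exprn_ge0 // ltW.
  move=> IHn.
  have h2 : alpha * f' <= alpha * (f * alpha + P * dn) by rewrite ler_pM2l.
  have h3 : alpha * (alpha * f) <= alpha * (P * S) by rewrite ler_pM2l.
  nra.
have key2 : forall k, frob (kron (A k) N - kron (B k) N)
    <= alpha ^+ (N - 1) * \sum_(j < N) frob (A k j - B k j).
  move=> k; have := key k N (leqnn N).
  case: N hN {HA HB kB key H Heps} => [//|N'] _.
  by rewrite subn1 /= exprS -mulrA ler_pM2l.
rewrite -sumrB; apply: le_trans; first exact: frob_sum.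
apply: (le_trans (ler_sum _ (fun k _ => key2 k))).
rewrite -mulr_sumr -mulrA ler_pM2l ?exprn_gt0 //.
have := @sum_le_sqrt _ _ (fun kn : 'I_r * 'I_N => frob (A kn.1 kn.2 - B kn.1 kn.2)).
rewrite -(pair_bigA _ (fun (i : 'I_r) (j : 'I_N) => frob (A i j - B i j) ^+ 2))
  -(pair_bigA _ (fun (i : 'I_r) (j : 'I_N) => frob (A i j - B i j))) card_prod !card_ord [(r * N)%N]mulnC => h.
apply: (le_trans h); rewrite ler_wpM2l ?sqrtr_ge0 //.
Qed.
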